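(* Let $n\geq5$ and let $M$ be a Lagrangian submanifold of a complex space form $\tilde M^n(4c)$ such that at a point $p\in M$ equality holds in $\delta(2,n-2)\leq\frac{n^2(n-2)}{4(n-1)}H^2+2(n-2)c$. Then there exist an orthonormal basis $\{e_1,\ldots,e_n\}$ of $T_pM$ and real numbers $\gamma,\lambda,\mu$ and $h^k_{ij}$ ($i,j,k\ge3$) such that $$h(e_1,e_1)=\gamma Je_1,\quad h(e_1,e_2)=(n\lambda-\gamma)Je_2,\quad h(e_2,e_2)=(n\lambda-\gamma)Je_1+n\mu Je_2,$$ $$h(e_1,e_i)=\lambda Je_i,\quad h(e_2,e_i)=\mu Je_i,\quad h(e_i,e_j)=\delta_{ij}(\lambda Je_1+\mu Je_2)+\sum_{k=3}^nh^k_{ij}Je_k$$ for $i,j\ge3$, where the $h^k_{ij}$ are symmetric in the three indices and $h^k_{33}+\cdots+h^k_{nn}=0$ for every $k\ge3$. Moreover $\gamma\ge0$ and $\gamma\ge\frac{2n}{3}\lambda$; if $\gamma=0$ then $\lambda=\mu=0$; and if $\gamma>0$ then $\gamma>\frac n2\lambda$.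
   Context: A complex space form $\tilde M^n(4c)$ is a Kähler manifold of complex dimension $n$ with complex structure $J$ and constant holomorphic sectional curvature $4c$. A real $n$-dimensional submanifold $M$ is Lagrangian if $J$ maps each $T_pM$ onto the normal space. $h$ is the second fundamental form, $H=\frac1n\operatorname{trace}h$, $H^2=\langle H,H\rangle$. For $L\subseteq T_pM$ of dimension $r\ge2$ with orthonormal basis $e_1,\ldots,e_r$, $\tau(L)=\sum_{\alpha<\beta}K(e_\alpha\wedge e_\beta)$ ($K$ the sectional curvature of $M$), $\tau(p)=\tau(T_pM)$, and $\delta(2,n-2)(p)=\tau(p)-\inf\{\tau(L_1)+\tau(L_2)\}$ over mutually orthogonal subspaces $L_1,L_2\subseteq T_pM$ with $\dim L_1=2$, $\dim L_2=n-2$. *)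

(* Defs.v *)
From HB Require Import structures.
From mathcomp Require Import all_boot all_order all_algebra.
From mathcomp Require Import classical_sets reals.
Set Implicit Arguments.
Unset Strict Implicit.
Unset Printing Implicit Defensive.
Import Order.TTheory GRing.Theory Num.Theory.
Local Open Scope ring_scope.
Local Open Scope classical_set_scope.

(* Pointwise model: T_pM is identified (isometrically) with R^n = 'rV[R]_n
   with the standard inner product; the normal space T_p^perp M = J(T_pM)
   is identified with T_pM via J^{-1}.  So a normal vector J v is
   represented by v, and the second fundamental form is encoded by its
   components C i j k = < h(e_i,e_j), J e_k > in the standard basis.     *)
Section Defs.
Variable R : realType.
Variable n : nat.

Definition vdot (u v : 'rV[R]_n) : R := \sum_(i < n) u 0 i * v 0 i.

Definition orthonormal_family (r : nat) (f : 'I_r -> 'rV[R]_n) : Prop :=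
  forall a b : 'I_r, vdot (f a) (f b) = (a == b)%:R.

(* Lagrangian condition: the cubic form <h(X,Y),JZ> is totally symmetric *)
Definition cubic_symmetric (C : 'I_n -> 'I_n -> 'I_n -> R) : Prop :=
  forall i j k, C i j k = C j i k /\ C i j k = C i k j.

(* J^{-1} h(u,v) *)
Definition sff (C : 'I_n -> 'I_n -> 'I_n -> R) (u v : 'rV[R]_n) : 'rV[R]_n :=
  \row_(k < n) \sum_(i < n) \sum_(j < n) u 0 i * v 0 j * C i j k.

(* sectional curvature of the plane spanned by orthonormal u, v, given by
   the Gauss equation for a Lagrangian submanifold of M~^n(4c) *)
Definition sec_curv (c : R) C (u v : 'rV[R]_n) : R :=
  c + vdot (sff C u u) (sff C v v) - vdot (sff C u v) (sff C u v).

Definition tau_fam (c : R) C (r : nat) (f : 'I_r -> 'rV[R]_n) : R :=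
  \sum_(a < r) \sum_(b < r | (a < b)%N) sec_curv c C (f a) (f b).

Definition std_basis : 'I_n -> 'rV[R]_n := fun i => delta_mx 0 i.

Definition tau_p (c : R) C : R := tau_fam c C std_basis.

Definition mean_curv C : 'rV[R]_n :=
  (n%:R)^-1 *: \sum_(i < n) sff C (std_basis i) (std_basis i).
Definition H2 C : R := vdot (mean_curv C) (mean_curv C).

Definition delta2 (c : R) C : R :=
  tau_p c C -
  inf [set x | exists (f1 : 'I_2 -> 'rV[R]_n) (f2 : 'I_(n - 2) -> 'rV[R]_n),
         orthonormal_family f1 /\ orthonormal_family f2 /\
         (forall a b, vdot (f1 a) (f2 b) = 0) /\
         x = tau_fam c C f1 + tau_fam c C f2].

End Defs.

(* Main.v *)
Require Import Defs.
From HB Require Import structures.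
From mathcomp Require Import all_boot all_order all_algebra.
From mathcomp Require Import classical_sets reals.
From mathcomp Require Import all_classical all_reals all_analysis.
From mathcomp Require Import ring lra zify.
Import numFieldNormedType.Exports.
Import Order.TTheory GRing.Theory Num.Theory.
Local Open Scope ring_scope.
Set Implicit Arguments.
Unset Strict Implicit.
Unset Printing Implicit Defensive.
Section Basic.
Variable R : realType.
Variable n : nat.
Implicit Types u v w : 'rV[R]_n.

Lemma vdotC u v : vdot u v = vdot v u.
Proof. by apply: eq_bigr => i _; rewrite mulrC. Qed.

Lemma vdotDl u v w : vdot (u + v) w = vdot u w + vdot v w.
Proof. rewrite /vdot -big_split; apply: eq_bigr => i _; by rewrite mxE mulrDl. Qed.

Lemma vdotZl a u w : vdot (a *: u) w = a * vdot u w.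
Proof. rewrite /vdot mulr_sumr; apply: eq_bigr => i _; by rewrite mxE mulrA. Qed.

Lemma vdot_suml I (r : seq I) (P : pred I) (F : I -> 'rV[R]_n) w :
  vdot (\sum_(i <- r | P i) F i) w = \sum_(i <- r | P i) vdot (F i) w.
Proof.
rewrite /vdot exchange_big /=; apply: eq_bigr => k _.
by rewrite summxE mulr_suml.
Qed.

Lemma vdotDr u v w : vdot w (u + v) = vdot w u + vdot w v.
Proof. by rewrite vdotC vdotDl !(vdotC w). Qed.
Lemma vdotZr a u w : vdot w (a *: u) = a * vdot w u.
Proof. by rewrite vdotC vdotZl vdotC. Qed.
Lemma vdot_sumr I (r : seq I) (P : pred I) (F : I -> 'rV[R]_n) w :
  vdot w (\sum_(i <- r | P i) F i) = \sum_(i <- r | P i) vdot w (F i).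
Proof. rewrite vdotC vdot_suml; apply: eq_bigr => i _; exact: vdotC. Qed.

Variable C : 'I_n -> 'I_n -> 'I_n -> R.
Hypothesis hLag : cubic_symmetric C.

Lemma sffE u v k : sff C u v 0 k = \sum_(p < n) \sum_(q < n) u 0 p * v 0 q * C p q k.
Proof. by rewrite mxE. Qed.

Lemma sffC u v : sff C u v = sff C v u.
Proof.
apply/rowP => k; rewrite !sffE exchange_big /=; apply: eq_bigr => p _.
apply: eq_bigr => q _; have [-> _] := hLag q p k; by rewrite (mulrC (v 0 p)).
Qed.

Lemma sffDl u v w : sff C (u + v) w = sff C u w + sff C v w.
Proof.
apply/rowP => k; rewrite !mxE -big_split; apply: eq_bigr => p _.
rewrite -big_split; apply: eq_bigr => q _; by rewrite mxE !mulrDl.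
Qed.

Lemma sffZl a u w : sff C (a *: u) w = a *: sff C u w.
Proof.
apply/rowP => k; rewrite !mxE mulr_sumr; apply: eq_bigr => p _.
rewrite mulr_sumr; apply: eq_bigr => q _; by rewrite mxE !mulrA.
Qed.

Lemma sffDr u v w : sff C w (u + v) = sff C w u + sff C w v.
Proof. by rewrite sffC sffDl !(sffC w). Qed.
Lemma sffZr a u w : sff C w (a *: u) = a *: sff C w u.
Proof. by rewrite sffC sffZl sffC. Qed.

Lemma sff_suml I (r : seq I) (P : pred I) (F : I -> 'rV[R]_n) w :
  sff C (\sum_(i <- r | P i) F i) w = \sum_(i <- r | P i) sff C (F i) w.
Proof.
elim: r => [|a r IH]; rewrite ?big_nil ?big_cons.
  by apply/rowP => k; rewrite !mxE big1 // => p _; rewrite big1 // => q _; rewrite mxE !mul0r.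
case: (P a); rewrite ?sffDl IH //.
Qed.

Definition cub u v w := vdot (sff C u v) w.

Lemma cubE u v w : cub u v w =
  \sum_(p < n) \sum_(q < n) \sum_(k < n) u 0 p * v 0 q * w 0 k * C p q k.
Proof.
rewrite /cub /vdot; under eq_bigr do rewrite sffE big_distrl /=.
rewrite exchange_big /=; apply: eq_bigr => p _.
under eq_bigr do rewrite big_distrl /=.
rewrite exchange_big /=; apply: eq_bigr => q _.
apply: eq_bigr => k _; by rewrite [_ * w 0 k]mulrC !mulrA [_ * w 0 k]mulrC !mulrA.
Qed.

Lemma cubC12 u v w : cub u v w = cub v u w.
Proof. by rewrite /cub sffC. Qed.

Lemma cubC23 u v w : cub u v w = cub u w v.
Proof.
rewrite !cubE; apply: eq_bigr => p _; rewrite exchange_big /=.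
apply: eq_bigr => q _; apply: eq_bigr => k _.
have [_ ->] := hLag p k q; ring.
Qed.

Lemma cubDl a b u v w z : cub (a *: u + b *: v) w z = a * cub u w z + b * cub v w z.
Proof. by rewrite /cub sffDl !sffZl vdotDl !vdotZl. Qed.

End Basic.
Section Frame.
Variable R : realType.
Variable n : nat.
Variable C : 'I_n -> 'I_n -> 'I_n -> R.
Hypothesis hLag : cubic_symmetric C.

Lemma sum_delta (G : 'I_n -> R) p : \sum_(q < n) G q * (p == q)%:R = G p.
Proof.
rewrite (bigD1 p) //= eqxx mulr1 big1 ?addr0 // => q /negbTE.
by rewrite eq_sym => ->; rewrite mulr0.
Qed.

Lemma sum_delta' (G : 'I_n -> R) p : \sum_(q < n) (q == p)%:R * G q = G p.
Proof. rewrite -[RHS](sum_delta G p); apply: eq_bigr => q _; by rewrite mulrC eq_sym. Qed.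

Variable e : 'I_n -> 'rV[R]_n.
Hypothesis He : orthonormal_family e.

Lemma col_orth p q : \sum_(i < n) e i 0 p * e i 0 q = (p == q)%:R.
Proof.
pose E : 'M[R]_n := \matrix_(i, p) e i 0 p.
have h1 : E *m E^T = 1%:M.
  apply/matrixP => a b; rewrite !mxE -He /vdot; apply: eq_bigr => k _; by rewrite !mxE.
have /matrixP/(_ p q) := mulmx1C h1; rewrite !mxE => <-.
by apply: eq_bigr => i _; rewrite !mxE.
Qed.

Lemma parsevalF (X Y : 'I_n -> R) :
  \sum_(j < n) (\sum_(q < n) e j 0 q * X q) * (\sum_(q < n) e j 0 q * Y q)
  = \sum_(q < n) X q * Y q.
Proof.
under eq_bigr do rewrite big_distrl /=.
rewrite exchange_big /=; apply: eq_bigr => p _.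
under eq_bigr do rewrite big_distrr /=.
rewrite exchange_big /=.
rewrite -[RHS](sum_delta (fun q => X p * Y q) p).
apply: eq_bigr => q _; rewrite -col_orth big_distrr /=.
by apply: eq_bigr => i _; ring.
Qed.

Lemma parseval u v : vdot u v = \sum_(i < n) vdot u (e i) * vdot v (e i).
Proof.
rewrite /vdot -(parsevalF (fun q => u 0 q) (fun q => v 0 q)).
apply: eq_bigr => j _; congr (_ * _); apply: eq_bigr => q _; exact: mulrC.
Qed.

Lemma expand u : u = \sum_(i < n) vdot u (e i) *: e i.
Proof.
apply/rowP => k; rewrite summxE.
under eq_bigr do rewrite mxE /vdot big_distrl /=.
rewrite exchange_big /= -[LHS](sum_delta (fun q => u 0 q) k).
apply: eq_bigr => p _; rewrite -col_orth big_distrr /=.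
by apply: eq_bigr => i _; ring.
Qed.

Lemma trace_inv (M : 'I_n -> 'I_n -> R) :
  \sum_(i < n) \sum_(p < n) \sum_(q < n) e i 0 p * e i 0 q * M p q = \sum_(p < n) M p p.
Proof.
rewrite exchange_big /=; apply: eq_bigr => p _.
rewrite exchange_big /= -[RHS](sum_delta (fun q => M p q) p).
apply: eq_bigr => q _; rewrite -col_orth big_distrr /=.
by apply: eq_bigr => i _; ring.
Qed.

Lemma TT_inv : \sum_(i < n) sff C (e i) (e i) = \row_k \sum_(p < n) C p p k.
Proof.
apply/rowP => k; rewrite summxE mxE -(trace_inv (fun p q => C p q k)).
by apply: eq_bigr => i _; rewrite sffE.
Qed.

Lemma SS_inv : \sum_(i < n) \sum_(j < n) vdot (sff C (e i) (e j)) (sff C (e i) (e j))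
  = \sum_(p < n) \sum_(q < n) \sum_(k < n) C p q k ^+ 2.
Proof.
have step : forall u, \sum_(j < n) vdot (sff C u (e j)) (sff C u (e j)) =
     \sum_(k < n) \sum_(q < n) (\sum_(p < n) u 0 p * C p q k) ^+ 2.
  move=> u; rewrite /vdot exchange_big /=; apply: eq_bigr => k _.
  rewrite -(parsevalF (fun q => \sum_(p < n) u 0 p * C p q k) (fun q => \sum_(p < n) u 0 p * C p q k)).
  apply: eq_bigr => j _; rewrite sffE; congr (_ * _);
  rewrite exchange_big /=; apply: eq_bigr => q _; rewrite big_distrr /=;
  apply: eq_bigr => p _; ring.
under eq_bigr do rewrite step.
rewrite exchange_big /=.
under eq_bigr do rewrite exchange_big /=.
symmetry.
under eq_bigr do rewrite exchange_big /=.
rewrite exchange_big /=.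
under eq_bigr do rewrite exchange_big /=.
apply: eq_bigr => k _; apply: eq_bigr => q _.
transitivity (\sum_(p<n) C p q k * C p q k); first by apply: eq_bigr => p _; rewrite expr2.
rewrite -(parsevalF (fun p => C p q k) (fun p => C p q k)).
by apply: eq_bigr => i _; rewrite expr2.
Qed.

End Frame.

Section Tau.
Variable R : realType.
Variable n : nat.
Variable C : 'I_n -> 'I_n -> 'I_n -> R.
Hypothesis hLag : cubic_symmetric C.
Variable c : R.

Lemma sec_curvC u v : sec_curv c C u v = sec_curv c C v u.
Proof. by rewrite /sec_curv vdotC (sffC hLag u v). Qed.

Lemma sec_curv_diag u : sec_curv c C u u = c.
Proof. by rewrite /sec_curv addrK. Qed.

Lemma sum_sym r (F : 'I_r -> 'I_r -> R) : (forall a b, F a b = F b a) ->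
  \sum_(a < r) \sum_(b < r) F a b =
  2 * (\sum_(a < r) \sum_(b < r | (a < b)%N) F a b) + \sum_(a < r) F a a.
Proof.
move=> FS.
have h1 : forall a, \sum_(b < r) F a b = \sum_(b < r | (a < b)%N) F a b
            + F a a + \sum_(b < r | (b < a)%N) F a b.
  move=> a; rewrite (bigID (fun b : 'I_r => (a < b)%N)) /= -addrA; congr (_ + _).
  rewrite (bigD1 a) /=; last by rewrite ltnn.
  congr (_ + _); apply: eq_bigl => b; rewrite -leqNgt.
  by rewrite ltn_neqAle andbC.
under eq_bigr do rewrite h1.
rewrite !big_split /= mulr2n mulrDl mul1r.
have -> : \sum_(a < r) \sum_(b < r | (b < a)%N) F a b =
          \sum_(a < r) \sum_(b < r | (a < b)%N) F a b.
  rewrite (exchange_big_dep xpredT) //=; apply: eq_bigr => a _.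
  by apply: eq_bigr => b _; rewrite FS.
ring.
Qed.

Lemma tau_sym r (f : 'I_r -> 'rV[R]_n) :
  tau_fam c C f = (\sum_(a < r) \sum_(b < r) sec_curv c C (f a) (f b) - r%:R * c) / 2.
Proof.
rewrite (@sum_sym _ (fun a b => sec_curv c C (f a) (f b))); last by move=> a b; exact: sec_curvC.
under [X in _ * _ + X]eq_bigr do rewrite sec_curv_diag.
rewrite sumr_const card_ord /tau_fam; field; by [].
Qed.

Lemma sum_sec r (f : 'I_r -> 'rV[R]_n) :
  \sum_(a < r) \sum_(b < r) sec_curv c C (f a) (f b) =
  (r%:R * r%:R) * c + vdot (\sum_(a < r) sff C (f a) (f a)) (\sum_(a < r) sff C (f a) (f a))
  - \sum_(a < r) \sum_(b < r) vdot (sff C (f a) (f b)) (sff C (f a) (f b)).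
Proof.
have e1 : vdot (\sum_(a < r) sff C (f a) (f a)) (\sum_(a < r) sff C (f a) (f a)) =
   \sum_(a < r) \sum_(b < r) vdot (sff C (f a) (f a)) (sff C (f b) (f b)).
  rewrite vdot_suml; apply: eq_bigr => a _; exact: vdot_sumr.
rewrite e1 /sec_curv.
have hc : r%:R * r%:R * c = \sum_(a < r) \sum_(b < r) c.
  by rewrite !sumr_const card_ord -[c *+ r]mulr_natl -[(_ * c) *+ r]mulr_natl mulrA.
rewrite hc -big_split -sumrB /=; apply: eq_bigr => a _.
by rewrite -big_split -sumrB.
Qed.

End Tau.
Section SOS.
Variable R : realType.
Variable n : nat.
Hypothesis hn : (5 <= n)%N.

Lemma lt0n' : (0 < n)%N. Proof. by apply: leq_trans hn. Qed.
Lemma lt1n' : (1 < n)%N. Proof. by apply: leq_trans hn. Qed.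
Definition o0 : 'I_n := Ordinal lt0n'.
Definition o1 : 'I_n := Ordinal lt1n'.

Lemma split3 (F : 'I_n -> R) :
  \sum_(i < n) F i = F o0 + F o1 + \sum_(i < n | (2 <= i)%N) F i.
Proof.
rewrite (bigD1 o0) // (bigD1 o1) //= addrA; congr (_ + _).
apply: eq_bigl => i; rewrite -!(inj_eq val_inj) /=.
by case: i => [[|[|i]] Hi].
Qed.

Lemma cardB : \sum_(i < n | (2 <= i)%N) (1 : R) = n%:R - 2.
Proof.
have h := split3 (fun _ => 1); rewrite sumr_const card_ord /= in h.
rewrite h; ring.
Qed.

Variable D : 'I_n -> 'I_n -> 'I_n -> R.
Hypothesis Dsym : cubic_symmetric D.

Lemma Dsym12 i j k : D i j k = D j i k. Proof. by case: (Dsym i j k). Qed.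
Lemma Dsym23 i j k : D i j k = D i k j. Proof. by case: (Dsym i j k). Qed.

Definition tt k := D o0 o0 k + D o1 o1 k.
Definition ss k := \sum_(j < n | (2 <= j)%N) D j j k.
Definition ZZ k := D o0 o0 k ^+ 2 + 2 * D o0 o1 k ^+ 2 + D o1 o1 k ^+ 2.
Definition WW a := \sum_(j < n | (2 <= j)%N) \sum_(k < n | (2 <= k)%N) D a j k ^+ 2.
Definition FF a := \sum_(j < n | (2 <= j)%N)
   (\sum_(k < n) D a a k * D j j k - \sum_(k < n) D a j k ^+ 2).
Definition Qp := FF o0 + FF o1.
Definition HH := \sum_(k < n) (\sum_(i < n) D i i k) ^+ 2.
Definition alpha : R := (n%:R - 2) / (4 * (n%:R - 1)).

Lemma HH_form : HH = (tt o0 + ss o0) ^+ 2 + (tt o1 + ss o1) ^+ 2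
   + \sum_(k < n | (2 <= k)%N) (tt k + ss k) ^+ 2.
Proof.
have h : forall k, \sum_(i < n) D i i k = tt k + ss k by move=> k; rewrite split3.
rewrite /HH; under eq_bigr do rewrite h.
by rewrite split3.
Qed.

Lemma Qp_form : Qp = tt o0 * ss o0 + tt o1 * ss o1
  + \sum_(k < n | (2 <= k)%N) (tt k * ss k - ZZ k) - WW o0 - WW o1.
Proof.
have hP : forall a, \sum_(j < n | (2 <= j)%N) \sum_(k < n) D a a k * D j j k
                 = \sum_(k < n) D a a k * ss k.
  move=> a; rewrite exchange_big /=; apply: eq_bigr => k _.
  by rewrite /ss mulr_sumr.
have hQ : forall a, \sum_(j < n | (2 <= j)%N) \sum_(k < n) D a j k ^+ 2
     = \sum_(j < n | (2 <= j)%N) (D a j o0 ^+ 2 + D a j o1 ^+ 2) + WW a.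
  move=> a; rewrite /WW -big_split /=; apply: eq_bigr => j _.
  by rewrite split3.
have hF : forall a, FF a = \sum_(k < n) D a a k * ss k -
   (\sum_(j < n | (2 <= j)%N) (D a j o0 ^+ 2 + D a j o1 ^+ 2) + WW a).
  by move=> a; rewrite /FF sumrB hP hQ.
rewrite /Qp !hF.
have e1 : \sum_(k < n) D o0 o0 k * ss k + \sum_(k < n) D o1 o1 k * ss k
   = tt o0 * ss o0 + tt o1 * ss o1 + \sum_(k < n | (2 <= k)%N) tt k * ss k.
  rewrite -big_split /= split3 /tt; congr (_ + _ + _); try ring.
  by apply: eq_bigr => k _; ring.
have e2 : \sum_(j < n | (2 <= j)%N) (D o0 j o0 ^+ 2 + D o0 j o1 ^+ 2)
   + \sum_(j < n | (2 <= j)%N) (D o1 j o0 ^+ 2 + D o1 j o1 ^+ 2)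
   = \sum_(k < n | (2 <= k)%N) ZZ k.
  rewrite -big_split /=; apply: eq_bigr => j _; rewrite /ZZ.
  rewrite (Dsym23 o0 j o0) (Dsym23 o0 j o1) (Dsym23 o1 j o0) (Dsym23 o1 j o1).
  rewrite (Dsym12 o1 o0 j); ring.
rewrite sumrB.
rewrite -[X in _ = X - WW o0 - WW o1]addrA.
move: e1 e2.
set A0 := \sum_(k < n) D o0 o0 k * ss k.
set A1 := \sum_(k < n) D o1 o1 k * ss k.
set B0 := \sum_(j < n | (2 <= j)%N) (D o0 j o0 ^+ 2 + D o0 j o1 ^+ 2).
set B1 := \sum_(j < n | (2 <= j)%N) (D o1 j o0 ^+ 2 + D o1 j o1 ^+ 2).
move=> e1 e2.
rewrite -e2.
have -> : A0 - (B0 + WW o0) + (A1 - (B1 + WW o1)) = (A0 + A1) - (B0 + B1) - WW o0 - WW o1 by ring.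
rewrite e1; ring.
Qed.

End SOS.
Section SOS2.
Variable R : realType.
Variable n : nat.
Hypothesis hn : (5 <= n)%N.
Variable D : 'I_n -> 'I_n -> 'I_n -> R.
Hypothesis Dsym : cubic_symmetric D.

Local Notation o0 := (o0 hn).
Local Notation o1 := (o1 hn).
Local Notation tt := (tt hn D).
Local Notation ss := (ss D).
Local Notation ZZ := (ZZ hn D).
Local Notation WW := (WW D).
Local Notation alpha := (alpha R n).

Definition mm : R := n%:R - 2.
Definition XX b := alpha * (tt b + ss b) ^+ 2 - tt b * ss b + WW b.
Definition YY k := alpha * (tt k + ss k) ^+ 2 - tt k * ss k + ZZ k.

Lemma n_ge5 : 5 <= n%:R :> R.
Proof. by rewrite (ler_nat R 5 n). Qed.

Lemma ident : alpha * HH D - Qp hn D = XX o0 + XX o1 + \sum_(k < n | (2 <= k)%N) YY k.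
Proof.
rewrite (HH_form hn) (Qp_form hn Dsym).
have -> : \sum_(k < n | (2 <= k)%N) YY k = alpha * \sum_(k < n | (2 <= k)%N) (tt k + ss k) ^+ 2
   - \sum_(k < n | (2 <= k)%N) (tt k * ss k - ZZ k).
  rewrite mulr_sumr -sumrB; apply: eq_bigr => k _; rewrite /YY; ring.
rewrite /XX; ring.
Qed.

Lemma alpha_ge : 3 / 16 <= alpha.
Proof.
have h5 := n_ge5.
have hpos : 0 < 4 * (n%:R - 1) :> R by lra.
rewrite /alpha ler_pdivlMr // ; lra.
Qed.

Lemma alpha_gt0 : 0 < alpha.
Proof. have := alpha_ge; lra. Qed.

Lemma YY_ge k : (tt k ^+ 2 + ss k ^+ 2) / 40 + (D o0 o0 k - D o1 o1 k) ^+ 2 / 2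
   + 2 * D o0 o1 k ^+ 2 <= YY k.
Proof.
have ha := alpha_ge.
rewrite /YY /ZZ /tt.
set a := D o0 o0 k; set b := D o1 o1 k; set d := D o0 o1 k; set s := ss k.
have h2 : 0 <= (alpha - 3 / 16) * (a + b + s) ^+ 2.
  by apply: mulr_ge0; [lra | exact: sqr_ge0].
have h3 : 0 <= (106 * (a + b) - 50 * s) ^+ 2 by exact: sqr_ge0.
have h4 : 0 <= s ^+ 2 by exact: sqr_ge0.
rewrite -subr_ge0.
have -> : alpha * (a + b + s) ^+ 2 - (a + b) * s + (a ^+ 2 + 2 * d ^+ 2 + b ^+ 2) -
   (((a + b) ^+ 2 + s ^+ 2) / 40 + (a - b) ^+ 2 / 2 + 2 * d ^+ 2)
  = (alpha - 3 / 16) * (a + b + s) ^+ 2 + ((106 * (a + b) - 50 * s) ^+ 2 + 256 * s ^+ 2) / 16960.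
  by field.
lra.
Qed.

Lemma sum_B_delta (G : 'I_n -> R) (j : 'I_n) : (2 <= j)%N ->
  \sum_(k < n | (2 <= k)%N) (j == k)%:R * G k = G j.
Proof.
move=> hj; rewrite (bigD1 j) //= eqxx mul1r big1 ?addr0 // => k /andP[_ /negbTE].
by rewrite eq_sym => ->; rewrite mul0r.
Qed.

Lemma sq_dev (x : 'I_n -> 'I_n -> R) (sg : R) :
  \sum_(j < n | (2 <= j)%N) \sum_(k < n | (2 <= k)%N) (x j k - (j == k)%:R * sg) ^+ 2
  = \sum_(j < n | (2 <= j)%N) \sum_(k < n | (2 <= k)%N) x j k ^+ 2
    - 2 * sg * \sum_(j < n | (2 <= j)%N) x j j + mm * sg ^+ 2.
Proof.
have hj : forall j : 'I_n, (2 <= j)%N ->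
  \sum_(k < n | (2 <= k)%N) (x j k - (j == k)%:R * sg) ^+ 2 =
  \sum_(k < n | (2 <= k)%N) x j k ^+ 2 - 2 * sg * x j j + sg ^+ 2.
  move=> j Hj.
  have e : forall k, (x j k - (j == k)%:R * sg) ^+ 2 =
     x j k ^+ 2 - 2 * sg * ((j == k)%:R * x j k) + (j == k)%:R * sg ^+ 2.
    by move=> k; case: (j == k); rewrite /= ?mul1r ?mul0r; ring.
  under eq_bigr do rewrite e.
  rewrite big_split sumrB /= -mulr_sumr sum_B_delta //.
  by rewrite (sum_B_delta (fun _ => sg ^+ 2)).
rewrite (eq_bigr _ hj) big_split sumrB /= -mulr_sumr.
have -> : \sum_(j < n | (2 <= j)%N) sg ^+ 2 = mm * sg ^+ 2.
  by rewrite /mm -(cardB R hn) mulr_suml; apply: eq_bigr => j _; rewrite mul1r.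
by [].
Qed.

Lemma mm_gt0 : 0 < mm.
Proof. have := n_ge5; rewrite /mm; lra. Qed.

Lemma XX_form b : XX b = alpha * (tt b - n%:R / mm * ss b) ^+ 2 +
  \sum_(j < n | (2 <= j)%N) \sum_(k < n | (2 <= k)%N) (D b j k - (j == k)%:R * (ss b / mm)) ^+ 2.
Proof.
rewrite (sq_dev (fun j k => D b j k)) /XX /WW.
have -> : \sum_(j < n | (2 <= j)%N) D b j j = ss b.
  by rewrite /ss; apply: eq_bigr => j _; rewrite (Dsym12 Dsym) (Dsym23 Dsym).
have hm := mm_gt0.
rewrite /alpha.
have -> : n%:R = mm + 2 by rewrite /mm; ring.
rewrite -/mm.
have -> : mm + 2 - 2 = mm by ring.
have -> : mm + 2 - 1 = mm + 1 by ring.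
field.
have h1 : mm != 0 by rewrite gt_eqF.
have h2 : mm + 1 != 0 by rewrite gt_eqF //; lra.
by rewrite h1 h2.
Qed.


End SOS2.
Section SOS3.
Variable R : realType.
Variable n : nat.
Hypothesis hn : (5 <= n)%N.
Variable D : 'I_n -> 'I_n -> 'I_n -> R.
Hypothesis Dsym : cubic_symmetric D.

Local Notation o0 := (o0 hn).
Local Notation o1 := (o1 hn).
Local Notation tt := (tt hn D).
Local Notation ss := (ss D).
Local Notation alpha := (alpha R n).
Local Notation XX := (XX hn D).
Local Notation YY := (YY hn D).
Local Notation mm := (mm R n).

Lemma sq0 (x : R) : x ^+ 2 = 0 -> x = 0.
Proof. by move/eqP; rewrite sqrf_eq0 => /eqP. Qed.

Lemma XX_ge0 b : 0 <= XX b.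
Proof.
rewrite (XX_form hn Dsym); apply: addr_ge0.
  apply: mulr_ge0; [exact: ltW (alpha_gt0 R hn) | exact: sqr_ge0].
by apply: sumr_ge0 => j _; apply: sumr_ge0 => k _; exact: sqr_ge0.
Qed.

Lemma YY_ge0 k : 0 <= YY k.
Proof.
have := YY_ge hn D k.
have := sqr_ge0 (tt k); have := sqr_ge0 (ss k);
have := sqr_ge0 (D o0 o0 k - D o1 o1 k); have := sqr_ge0 (D o0 o1 k); lra.
Qed.

Lemma XX0 b : XX b = 0 -> tt b = n%:R * (ss b / mm) /\
  forall j k : 'I_n, (2 <= j)%N -> (2 <= k)%N -> D b j k = (j == k)%:R * (ss b / mm).
Proof.
rewrite (XX_form hn Dsym).
set A := alpha * _; set S := \sum_(j < n | _) _.
have hA : 0 <= A.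
  apply: mulr_ge0; [exact: ltW (alpha_gt0 R hn) | exact: sqr_ge0].
have hS : 0 <= S.
  by apply: sumr_ge0 => j _; apply: sumr_ge0 => k _; exact: sqr_ge0.
move=> h.
have A0 : A = 0 by lra.
have S0 : S = 0 by lra.
split.
  move: A0; rewrite /A => /eqP; rewrite mulf_eq0 gt_eqF ?alpha_gt0 //= => /eqP/sq0 h0.
  lra.
move=> j k hj hk.
have := psumr_eq0P (fun j _ => sumr_ge0 _ (fun k _ => sqr_ge0 _)) S0 hj.
move=> Hk.
have := psumr_eq0P (fun k _ => sqr_ge0 _) Hk hk.
by move/sq0/eqP; rewrite subr_eq0 => /eqP.
Qed.

Lemma YY0 k : YY k = 0 -> D o0 o0 k = 0 /\ D o0 o1 k = 0 /\ D o1 o1 k = 0 /\ ss k = 0.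
Proof.
move=> h; have := YY_ge hn D k; rewrite h.
have h1 := sqr_ge0 (tt k); have h2 := sqr_ge0 (ss k);
have h3 := sqr_ge0 (D o0 o0 k - D o1 o1 k); have h4 := sqr_ge0 (D o0 o1 k).
move=> hle.
have e1 : tt k ^+ 2 = 0 by lra.
have e2 : ss k ^+ 2 = 0 by lra.
have e3 : (D o0 o0 k - D o1 o1 k) ^+ 2 = 0 by lra.
have e4 : D o0 o1 k ^+ 2 = 0 by lra.
move: (sq0 e1) (sq0 e2) (sq0 e3) (sq0 e4); rewrite /tt => f1 f2 f3 f4.
split; first lra. split; first lra. split; lra.
Qed.

Lemma sos_eq : Qp hn D = alpha * HH D ->
  exists l0 l1 : R,
   (forall k : 'I_n, (2 <= k)%N ->
      D o0 o0 k = 0 /\ D o0 o1 k = 0 /\ D o1 o1 k = 0 /\ ss k = 0) /\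
   (forall j k : 'I_n, (2 <= j)%N -> (2 <= k)%N ->
      D o0 j k = (j == k)%:R * l0 /\ D o1 j k = (j == k)%:R * l1) /\
   tt o0 = n%:R * l0 /\ tt o1 = n%:R * l1.
Proof.
move=> heq.
have hz : XX o0 + XX o1 + \sum_(k < n | (2 <= k)%N) YY k = 0.
  by rewrite -(ident hn Dsym) heq subrr.
have h0 := XX_ge0 o0; have h1 := XX_ge0 o1.
have hs : 0 <= \sum_(k < n | (2 <= k)%N) YY k by apply: sumr_ge0 => k _; exact: YY_ge0.
have x0 : XX o0 = 0 by lra.
have x1 : XX o1 = 0 by lra.
have y0 : \sum_(k < n | (2 <= k)%N) YY k = 0 by lra.
have hY := psumr_eq0P (fun k _ => YY_ge0 k) y0.
have [t0 d0] := XX0 x0; have [t1 d1] := XX0 x1.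
exists (ss o0 / mm), (ss o1 / mm); split; last split.
- by move=> k hk; apply: YY0; exact: hY.
- by move=> j k hj hk; split; [exact: d0 | exact: d1].
- by [].
Qed.

End SOS3.
Section FrameQ.
Variable R : realType.
Variable n : nat.
Hypothesis hn : (5 <= n)%N.

Local Notation o0 := (o0 hn).
Local Notation o1 := (o1 hn).

Lemma widP (a : 'I_2) : (a < n)%N.
Proof. have := ltn_ord a; have := hn; lia. Qed.
Definition wid (a : 'I_2) : 'I_n := Ordinal (widP a).
Lemma shP (b : 'I_(n - 2)) : (b + 2 < n)%N.
Proof. have := ltn_ord b; have := hn; lia. Qed.
Definition sh (b : 'I_(n - 2)) : 'I_n := Ordinal (shP b).

Lemma sum_wid (F : 'I_n -> R) : \sum_(a < 2) F (wid a) = F o0 + F o1.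
Proof.
rewrite big_ord_recl big_ord_recl big_ord0 addr0; congr (F _ + F _); exact: val_inj.
Qed.

Lemma sum_sh (F : 'I_n -> R) :
  \sum_(b < n - 2) F (sh b) = \sum_(i < n | (2 <= i)%N) F i.
Proof.
pose G (k : nat) := F (insubd o0 k).
have e1 : forall b : 'I_(n - 2), F (sh b) = G (b + 2)%N.
  move=> b; rewrite /G; congr F; apply: val_inj; rewrite val_insubd /=.
  by rewrite shP.
have e2 : forall i : 'I_n, F i = G i by move=> i; rewrite /G valKd.
under eq_bigr do rewrite e1.
under [RHS]eq_bigr do rewrite e2.
rewrite -(big_mkord xpredT (fun b => G (b + 2)%N)).
rewrite -(big_mkord (fun i => 2 <= i)%N G).
rewrite -{1}[0%N]/(0 + 0)%N -(big_addn 0 n 2 xpredT G) add0n.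
rewrite [RHS](big_cat_nat _ (n := 2)) //=; last by have := hn; lia.
rewrite [X in _ = X + _]big_nat_cond [X in _ = X + _]big1 ?add0r; last first.
  by move=> i /andP[/andP[_ h1] h2]; lia.
rewrite [RHS]big_nat_cond [LHS]big_nat_cond; apply: eq_bigl => i.
by case/boolP: (2 <= i < n)%N => //= /andP[->].
Qed.

Lemma split_sym (F : 'I_n -> 'I_n -> R) : (forall i j, F i j = F j i) ->
  \sum_(i < n) \sum_(j < n) F i j =
   F o0 o0 + F o0 o1 + (F o1 o0 + F o1 o1)
   + 2 * (\sum_(j < n | (2 <= j)%N) F o0 j + \sum_(j < n | (2 <= j)%N) F o1 j)
   + \sum_(i < n | (2 <= i)%N) \sum_(j < n | (2 <= j)%N) F i j.
Proof.
move=> FS.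
rewrite (split3 hn (fun i => \sum_(j < n) F i j)).
rewrite !(split3 hn (fun j => F _ j)) /=.
under [X in _ + X = _]eq_bigr do rewrite (split3 hn (F _)).
rewrite big_split big_split /=.
have -> : \sum_(i < n | (2 <= i)%N) F i o0 = \sum_(j < n | (2 <= j)%N) F o0 j.
  by apply: eq_bigr => i _; rewrite FS.
have -> : \sum_(i < n | (2 <= i)%N) F i o1 = \sum_(j < n | (2 <= j)%N) F o1 j.
  by apply: eq_bigr => i _; rewrite FS.
ring.
Qed.

Lemma std_on : orthonormal_family (@std_basis R n).
Proof.
move=> a b; rewrite /vdot /std_basis.
under eq_bigr do rewrite !mxE /=.
exact: (sum_delta' (fun q => (q == b)%:R) a).
Qed.

End FrameQ.
Section FrameMain.
Variable R : realType.
Variable n : nat.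
Hypothesis hn : (5 <= n)%N.
Variable C : 'I_n -> 'I_n -> 'I_n -> R.
Hypothesis hLag : cubic_symmetric C.
Variable c : R.
Variable e : 'I_n -> 'rV[R]_n.
Hypothesis He : orthonormal_family e.

Local Notation o0 := (o0 hn).
Local Notation o1 := (o1 hn).

Definition De i j k := cub C (e i) (e j) (e k).
Definition Kf i j := sec_curv c C (e i) (e j).

Lemma De_sym : cubic_symmetric De.
Proof. by move=> i j k; rewrite /De; split; [exact: cubC12 | exact: cubC23]. Qed.

Lemma K_D i j : Kf i j = c + \sum_(k < n) De i i k * De j j k - \sum_(k < n) De i j k ^+ 2.
Proof.
rewrite /Kf /sec_curv (parseval He (sff C (e i) (e i))) (parseval He (sff C (e i) (e j))).
by congr (_ + _ - _); apply: eq_bigr => k _; rewrite expr2.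
Qed.

Lemma Kf_sym i j : Kf i j = Kf j i.
Proof. exact: sec_curvC. Qed.

Lemma tau_p_frame : tau_p c C = (\sum_(i < n) \sum_(j < n) Kf i j - n%:R * c) / 2.
Proof.
rewrite /tau_p (tau_sym hLag) (sum_sec C c (@std_basis R n)) (sum_sec C c e).
by rewrite (TT_inv C (@std_on R n)) (SS_inv C (@std_on R n)) (TT_inv C He) (SS_inv C He).
Qed.

Lemma Q_frame : tau_p c C - (tau_fam c C (fun a => e (wid hn a)) + tau_fam c C (fun b => e (sh hn b)))
  = 2 * (n%:R - 2) * c + Qp hn De.
Proof.
rewrite tau_p_frame !(tau_sym hLag).
have h1 : \sum_(a < 2) \sum_(b < 2) sec_curv c C (e (wid hn a)) (e (wid hn b))
   = Kf o0 o0 + Kf o0 o1 + (Kf o1 o0 + Kf o1 o1).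
  rewrite (sum_wid hn (fun i => \sum_(b < 2) sec_curv c C (e i) (e (wid hn b)))).
  by rewrite !(sum_wid hn (fun j => sec_curv c C (e _) (e j))).
have h2 : \sum_(a < n - 2) \sum_(b < n - 2) sec_curv c C (e (sh hn a)) (e (sh hn b))
   = \sum_(i < n | (2 <= i)%N) \sum_(j < n | (2 <= j)%N) Kf i j.
  rewrite (sum_sh hn (fun i => \sum_(b < n - 2) sec_curv c C (e i) (e (sh hn b)))).
  by apply: eq_bigr => i _; rewrite (sum_sh hn (fun j => sec_curv c C (e i) (e j))).
rewrite h1 h2.
have h3 : \sum_(i < n) \sum_(j < n) Kf i j =
   Kf o0 o0 + Kf o0 o1 + (Kf o1 o0 + Kf o1 o1)
   + 2 * (\sum_(j < n | (2 <= j)%N) Kf o0 j + \sum_(j < n | (2 <= j)%N) Kf o1 j)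
   + \sum_(i < n | (2 <= i)%N) \sum_(j < n | (2 <= j)%N) Kf i j.
  exact: (split_sym hn Kf_sym).
rewrite h3.
have hF : forall a, \sum_(j < n | (2 <= j)%N) Kf a j = (n%:R - 2) * c + FF De a.
  move=> a; rewrite /FF -(cardB R hn) mulr_suml -big_split /=.
  by apply: eq_bigr => j _; rewrite K_D mul1r addrA.
rewrite !hF /Qp.
have -> : ((n - 2)%N%:R : R) = n%:R - 2 by rewrite natrB //; have := hn; lia.
by field.
Qed.

Lemma H2_frame : H2 C = HH De / n%:R ^+ 2.
Proof.
have hn0 : n%:R != 0 :> R by rewrite pnatr_eq0 -lt0n; have := hn; lia.
rewrite /H2 /mean_curv.
have -> : \sum_(i < n) sff C (@std_basis R n i) (@std_basis R n i) = \sum_(i < n) sff C (e i) (e i).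
  by rewrite (TT_inv C (@std_on R n)) (TT_inv C He).
rewrite vdotZl vdotZr (parseval He) /HH.
have -> : \sum_(k < n) vdot (\sum_(i < n) sff C (e i) (e i)) (e k) *
     vdot (\sum_(i < n) sff C (e i) (e i)) (e k) =
   \sum_(k < n) (\sum_(i < n) De i i k) ^+ 2.
  apply: eq_bigr => k _; rewrite vdot_suml expr2 //.
field.
by [].
Qed.

End FrameMain.
Section Circle.
Variable R : realType.

Definition gcub (g q b d c s : R) := g * c ^+ 3 + 3 * q * c ^+ 2 * s + 3 * b * c * s ^+ 2 + d * s ^+ 3.

Lemma bnd (x p a : R) : 0 <= p -> p <= a -> x * p <= `|x| * a.
Proof.
move=> p0 pa; apply: le_trans (_ : `|x| * p <= _).
  by apply: ler_wpM2r => //; exact: ler_norm.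
by apply: ler_wpM2l => //; exact: normr_ge0.
Qed.

Lemma Ppos (g q b d : R) : (forall c s : R, c ^+ 2 + s ^+ 2 = 1 -> gcub g q b d c s <= g) ->
  forall t : R, 0 <= - 6 * q * t + (6 * g - 12 * b) * t ^+ 2 + (12 * q - 8 * d) * t ^+ 3
     + 12 * b * t ^+ 4 - 6 * q * t ^+ 5 + 2 * g * t ^+ 6.
Proof.
move=> H t.
have ht : 0 < 1 + t ^+ 2 by have := sqr_ge0 t; lra.
have ht0 : 1 + t ^+ 2 != 0 by rewrite gt_eqF.
set c := (1 - t ^+ 2) / (1 + t ^+ 2); set s := 2 * t / (1 + t ^+ 2).
have hcs : c ^+ 2 + s ^+ 2 = 1 by rewrite /c /s; field.
have := H c s hcs.
have -> : gcub g q b d c s = (g * (1 - t ^+ 2) ^+ 3 + 6 * q * t * (1 - t ^+ 2) ^+ 2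
    + 12 * b * t ^+ 2 * (1 - t ^+ 2) + 8 * d * t ^+ 3) / (1 + t ^+ 2) ^+ 3.
  by rewrite /gcub /c /s; field.
rewrite ler_pdivrMr; last by apply: exprn_gt0.
move=> h.
have -> : - 6 * q * t + (6 * g - 12 * b) * t ^+ 2 + (12 * q - 8 * d) * t ^+ 3
     + 12 * b * t ^+ 4 - 6 * q * t ^+ 5 + 2 * g * t ^+ 6 =
    g * (1 + t ^+ 2) ^+ 3 - (g * (1 - t ^+ 2) ^+ 3 + 6 * q * t * (1 - t ^+ 2) ^+ 2
    + 12 * b * t ^+ 2 * (1 - t ^+ 2) + 8 * d * t ^+ 3) by ring.
lra.
Qed.

Lemma q_le0 (g q b d : R) : (forall c s : R, c ^+ 2 + s ^+ 2 = 1 -> gcub g q b d c s <= g) ->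
  q <= 0.
Proof.
move=> H; rewrite leNgt; apply/negP => hq.
pose M : R := `|6 * g - 12 * b| + `|12 * q - 8 * d| + `|12 * b| + `|- 6 * q| + `|2 * g|.
have hM : 0 <= M by rewrite /M; have := normr_ge0 (6 * g - 12 * b);
  have := normr_ge0 (12 * q - 8 * d); have := normr_ge0 (12 * b);
  have := normr_ge0 (- 6 * q); have := normr_ge0 (2 * g); lra.
pose t : R := q / (q + M + 1).
have hd : 0 < q + M + 1 by lra.
have t0 : 0 < t by rewrite /t divr_gt0.
have t1 : t <= 1 by rewrite /t ler_pdivrMr //; lra.
have tM : t * M < q.
  rewrite /t mulrAC ltr_pdivrMr //; nra.
have a2 : 0 <= t ^+ 2 by exact: sqr_ge0.
have p3 : t ^+ 3 <= t ^+ 2 by rewrite exprS expr2; nra.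
have p4 : t ^+ 4 <= t ^+ 2 by rewrite (exprS t 3); nra.
have p5 : t ^+ 5 <= t ^+ 2 by rewrite (exprS t 4); nra.
have p6 : t ^+ 6 <= t ^+ 2 by rewrite (exprS t 5); nra.
have g3 : 0 <= t ^+ 3 by apply: exprn_ge0; lra.
have g4 : 0 <= t ^+ 4 by apply: exprn_ge0; lra.
have g5 : 0 <= t ^+ 5 by apply: exprn_ge0; lra.
have g6 : 0 <= t ^+ 6 by apply: exprn_ge0; lra.
have b2 := bnd (6 * g - 12 * b) a2 (lexx (t ^+ 2)).
have b3 := bnd (12 * q - 8 * d) g3 p3.
have b4 := bnd (12 * b) g4 p4.
have b5 := bnd (- 6 * q) g5 p5.
have b6 := bnd (2 * g) g6 p6.
have h5 : t * (t * M) < t * q by rewrite ltr_pM2l.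
have qt : 0 < q * t by apply: mulr_gt0.
have hP := Ppos H t.
have e5 : t * (t * M) = M * t ^+ 2 by rewrite expr2; ring.
rewrite /M in h5 e5.
have : - 6 * q * t + (6 * g - 12 * b) * t ^+ 2 + (12 * q - 8 * d) * t ^+ 3
     + 12 * b * t ^+ 4 - 6 * q * t ^+ 5 + 2 * g * t ^+ 6 <= - 6 * q * t + (`|6 * g - 12 * b| + `|12 * q - 8 * d| + `|12 * b| + `|- 6 * q| + `|2 * g|) * t ^+ 2.
  lra.
lra.
Qed.

Lemma b_le (g b d : R) : (forall c s : R, c ^+ 2 + s ^+ 2 = 1 -> gcub g 0 b d c s <= g) ->
  2 * b <= g.
Proof.
move=> H; rewrite leNgt; apply/negP => hb.
pose ep : R := 12 * b - 6 * g.
have he : 0 < ep by rewrite /ep; lra.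
pose M : R := `|- 8 * d| + `|12 * b| + `|2 * g|.
have hM : 0 <= M by rewrite /M; have := normr_ge0 (- 8 * d);
  have := normr_ge0 (12 * b); have := normr_ge0 (2 * g); lra.
pose t : R := ep / (ep + M + 1).
have hd : 0 < ep + M + 1 by lra.
have t0 : 0 < t by rewrite /t divr_gt0.
have t1 : t <= 1 by rewrite /t ler_pdivrMr //; lra.
have tM : t * M < ep.
  rewrite /t mulrAC ltr_pdivrMr //; nra.
have a3 : 0 <= t ^+ 3 by apply: exprn_ge0; lra.
have p4 : t ^+ 4 <= t ^+ 3 by rewrite (exprS t 3); nra.
have p6 : t ^+ 6 <= t ^+ 3 by rewrite (exprS t 5) (exprS t 4) (exprS t 3); nra.
have g4 : 0 <= t ^+ 4 by apply: exprn_ge0; lra.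
have g6 : 0 <= t ^+ 6 by apply: exprn_ge0; lra.
have b3 := bnd (- 8 * d) a3 (lexx (t ^+ 3)).
have b4 := bnd (12 * b) g4 p4.
have b6 := bnd (2 * g) g6 p6.
have t2 : 0 < t ^+ 2 by apply: exprn_gt0.
have h5 : t ^+ 2 * (t * M) < t ^+ 2 * ep by rewrite ltr_pM2l.
have e5 : t ^+ 2 * (t * M) = M * t ^+ 3 by rewrite (exprS t 2); ring.
have e6 : t ^+ 2 * ep = ep * t ^+ 2 by ring.
have hP := Ppos H t.
rewrite /M /ep in e5 e6 h5.
have e7 : 0 * t = 0 by ring.
have e8 : 6 * 0 = 0 :> R by ring.
have e9 : 12 * 0 - 8 * d = - 8 * d by ring.
have e10 : - 6 * 0 * t = 0 :> R by ring.
have e11 : - 6 * 0 * t ^+ 5 = 0 :> R by ring.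
lra.
Qed.

Lemma circle_max (g q b d : R) :
  (forall c s : R, c ^+ 2 + s ^+ 2 = 1 -> gcub g q b d c s <= g) ->
  q = 0 /\ 2 * b <= g /\ 0 <= g /\ (g = 0 -> b = 0 /\ d = 0).
Proof.
move=> H.
have q1 := q_le0 H.
have q2 : - q <= 0.
  apply: (@q_le0 g (- q) b (- d)) => c s hcs.
  have -> : gcub g (- q) b (- d) c s = gcub g q b d c (- s) by rewrite /gcub; ring.
  by apply: H; rewrite sqrrN.
have q0 : q = 0 by lra.
subst q.
have hb := b_le H.
have hg : 0 <= g.
  have := H (- 1) 0; rewrite /gcub; move=> h.
  have : (- 1) ^+ 2 + 0 ^+ 2 = 1 :> R by ring.
  move/h; lra.
split => //; split => //; split => // g0; subst g.
have h1 : (0 : R) ^+ 2 + 1 ^+ 2 = 1 by ring.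
have h2 : (0 : R) ^+ 2 + (- 1) ^+ 2 = 1 by ring.
have h3 : (3 / 5 : R) ^+ 2 + (4 / 5) ^+ 2 = 1 by field.
have h4 : (- (3 / 5) : R) ^+ 2 + (- (4 / 5)) ^+ 2 = 1 by field.
move: (H _ _ h1) (H _ _ h2) (H _ _ h3) (H _ _ h4); rewrite /gcub.
move=> k1 k2 k3 k4.
have k1' : d <= 0 by move: k1; have -> : 0 * 0 ^+ 3 + 3 * 0 * 0 ^+ 2 * 1 + 3 * b * 0 * 1 ^+ 2 + d * 1 ^+ 3 = d :> R by ring.
have k2' : - d <= 0 by move: k2; have -> : 0 * 0 ^+ 3 + 3 * 0 * 0 ^+ 2 * (- 1) + 3 * b * 0 * (- 1) ^+ 2 + d * (- 1) ^+ 3 = - d :> R by ring.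
have d0 : d = 0 by lra.
subst d.
have k3' : b * (144 / 125) <= 0.
  by move: k3; have -> : 0 * (3 / 5) ^+ 3 + 3 * 0 * (3 / 5) ^+ 2 * (4 / 5) + 3 * b * (3 / 5) * (4 / 5) ^+ 2 + 0 * (4 / 5) ^+ 3 = b * (144 / 125) :> R by field.
have k4' : - b * (144 / 125) <= 0.
  by move: k4; have -> : 0 * (- (3 / 5)) ^+ 3 + 3 * 0 * (- (3 / 5)) ^+ 2 * (- (4 / 5)) + 3 * b * (- (3 / 5)) * (- (4 / 5)) ^+ 2 + 0 * (- (4 / 5)) ^+ 3 = - b * (144 / 125) :> R by field.
split; lra.
Qed.

End Circle.
Section Rot.
Variable R : realType.
Variable n : nat.
Variable C : 'I_n -> 'I_n -> 'I_n -> R.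
Hypothesis hLag : cubic_symmetric C.
Variable c : R.
Implicit Types u v : 'rV[R]_n.

Lemma sec_rot (a b : R) u v : a ^+ 2 + b ^+ 2 = 1 ->
  sec_curv c C (a *: u + b *: v) ((- b) *: u + a *: v) = sec_curv c C u v.
Proof.
move=> hab; rewrite /sec_curv.
rewrite !(sffDl, sffDr, sffZl, sffZr) // ?(sffC hLag v u).
rewrite !(vdotDl, vdotDr, vdotZl, vdotZr).
rewrite (vdotC (sff C v v) (sff C u u)) (vdotC (sff C u v) (sff C u u)) (vdotC (sff C v v) (sff C u v)).
set X := vdot (sff C u u) (sff C u u); set Y := vdot (sff C u u) (sff C u v).
set Z := vdot (sff C u u) (sff C v v); set W := vdot (sff C u v) (sff C u v).
set V := vdot (sff C u v) (sff C v v); set T := vdot (sff C v v) (sff C v v).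
transitivity (c + (a ^+ 2 + b ^+ 2) ^+ 2 * (Z - W)); first ring.
by rewrite hab expr1n mul1r addrA.
Qed.

Lemma cubD1 a b u v x y : cub C (a *: u + b *: v) x y = a * cub C u x y + b * cub C v x y.
Proof. exact: cubDl. Qed.
Lemma cubD2 a b u v x y : cub C x (a *: u + b *: v) y = a * cub C x u y + b * cub C x v y.
Proof. by rewrite (cubC12 hLag) cubD1 !(cubC12 hLag _ x). Qed.
Lemma cubD3 a b u v x y : cub C x y (a *: u + b *: v) = a * cub C x y u + b * cub C x y v.
Proof. by rewrite (cubC23 hLag) cubD2 !(cubC23 hLag x _ y). Qed.

Lemma cub_rot (a b : R) u v :
  cub C (a *: u + b *: v) (a *: u + b *: v) (a *: u + b *: v) =
  gcub (cub C u u u) (cub C u u v) (cub C u v v) (cub C v v v) a b.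
Proof.
rewrite cubD3 !cubD2 !cubD1.
rewrite (cubC23 hLag v v u) (cubC12 hLag v u u) (cubC12 hLag v u v) (cubC23 hLag u v u).
rewrite /gcub; ring.
Qed.

End Rot.
Section RotFrame.
Variable R : realType.
Variable n : nat.
Hypothesis hn : (5 <= n)%N.
Variable C : 'I_n -> 'I_n -> 'I_n -> R.
Hypothesis hLag : cubic_symmetric C.
Variable c : R.

Local Notation o0 := (o0 hn).
Local Notation o1 := (o1 hn).

Definition erot (e : 'I_n -> 'rV[R]_n) (a b : R) (i : 'I_n) : 'rV[R]_n :=
  if i == o0 then a *: e o0 + b *: e o1
  else if i == o1 then (- b) *: e o0 + a *: e o1 else e i.

Lemma o01 : (o0 == o1) = false. Proof. by []. Qed.
Lemma o10 : (o1 == o0) = false. Proof. by []. Qed.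

Lemma erot0 e a b : erot e a b o0 = a *: e o0 + b *: e o1.
Proof. by rewrite /erot eqxx. Qed.
Lemma erot1 e a b : erot e a b o1 = (- b) *: e o0 + a *: e o1.
Proof. by rewrite /erot o10 eqxx. Qed.
Lemma erotB e a b (k : 'I_n) : (2 <= k)%N -> erot e a b k = e k.
Proof.
move=> hk; rewrite /erot.
have -> : (k == o0) = false by apply/negbTE; rewrite -(inj_eq val_inj) /=; case: k hk => [[|[|k]] ?].
have -> : (k == o1) = false by apply/negbTE; rewrite -(inj_eq val_inj) /=; case: k hk => [[|[|k]] ?].
by [].
Qed.

Lemma erot_on e a b : orthonormal_family e -> a ^+ 2 + b ^+ 2 = 1 ->
  orthonormal_family (erot e a b).
Proof.
move=> He hab.
have key : forall (p q : R) (k : 'I_n), (2 <= k)%N -> vdot (p *: e o0 + q *: e o1) (e k) = 0.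
  move=> p q k hk; rewrite vdotDl !vdotZl !He.
  have -> : (o0 == k) = false by apply/negbTE; rewrite -(inj_eq val_inj) /=; case: k hk => [[|[|k]] ?].
  have -> : (o1 == k) = false by apply/negbTE; rewrite -(inj_eq val_inj) /=; case: k hk => [[|[|k]] ?].
  by rewrite !mulr0 addr0.
have key2 : forall p q r s : R, vdot (p *: e o0 + q *: e o1) (r *: e o0 + s *: e o1) = p * r + q * s.
  move=> p q r s; rewrite vdotDl vdotDr vdotDr !vdotZl !vdotZr !He !eqxx o01 o10 /=; ring.
have cases : forall i : 'I_n, i = o0 \/ i = o1 \/ (2 <= i)%N.
  move=> [[|[|i]] hi]; [left | right; left | right; right] => //; exact: val_inj.
move=> i j.
case: (cases i) => [->|[->|hi]]; case: (cases j) => [->|[->|hj]];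
  rewrite ?erot0 ?erot1 ?(erotB _ _ _ hi) ?(erotB _ _ _ hj) ?key2 ?eqxx ?o01 ?o10 ?key /=.
all: try (by rewrite -hab; ring).
all: try (by ring).
- have -> : (o0 == j) = false by apply/negbTE; rewrite -(inj_eq val_inj) /=; case: j hj => [[|[|j]] ?].
  by [].
- by [].
- have -> : (o1 == j) = false by apply/negbTE; rewrite -(inj_eq val_inj) /=; case: j hj => [[|[|j]] ?].
  by [].
- by [].
- have -> : (i == o0) = false by apply/negbTE; rewrite -(inj_eq val_inj) /=; case: i hi => [[|[|i]] ?].
  by rewrite vdotC key.
- have -> : (i == o1) = false by apply/negbTE; rewrite -(inj_eq val_inj) /=; case: i hi => [[|[|i]] ?].
  by rewrite vdotC key.
- exact: He.
Qed.

Lemma tau_f1 (e : 'I_n -> 'rV[R]_n) :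
  tau_fam c C (fun a => e (wid hn a)) = sec_curv c C (e o0) (e o1).
Proof.
rewrite (tau_sym hLag) (sum_wid hn (fun i => \sum_(b < 2) sec_curv c C (e i) (e (wid hn b)))).
rewrite !(sum_wid hn (fun j => sec_curv c C (e _) (e j))).
rewrite !sec_curv_diag (sec_curvC hLag c (e o1)).
by field.
Qed.

Definition Gfr (e : 'I_n -> 'rV[R]_n) :=
  tau_fam c C (fun a => e (wid hn a)) + tau_fam c C (fun b => e (sh hn b)).

Lemma G_rot e a b : a ^+ 2 + b ^+ 2 = 1 -> Gfr (erot e a b) = Gfr e.
Proof.
move=> hab; rewrite /Gfr !tau_f1 erot0 erot1 (sec_rot hLag) //.
congr (_ + _); congr (tau_fam c C _).
apply: boolp.funext => k; apply: erotB => /=; lia.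
Qed.

Lemma split3V (F : 'I_n -> 'rV[R]_n) :
  \sum_(i < n) F i = F o0 + F o1 + \sum_(i < n | (2 <= i)%N) F i.
Proof.
rewrite (bigD1 o0) // (bigD1 o1) //= addrA; congr (_ + _).
apply: eq_bigl => i; rewrite -!(inj_eq val_inj) /=.
by case: i => [[|[|i]] Hi].
Qed.

Lemma sum_B_deltaV (G : 'I_n -> 'rV[R]_n) (l : R) (j : 'I_n) : (2 <= j)%N ->
  \sum_(k < n | (2 <= k)%N) ((j == k)%:R * l) *: G k = l *: G j.
Proof.
move=> hj; rewrite (bigD1 j) //= eqxx mul1r big1 ?addr0 // => k /andP[_ /negbTE].
by rewrite eq_sym => ->; rewrite mul0r scale0r.
Qed.

Lemma conclude (e : 'I_n -> 'rV[R]_n) (He : orthonormal_family e)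
  (heqQ : Qp hn (De C e) = alpha R n * HH (De C e))
  (hmax : forall a b : R, a ^+ 2 + b ^+ 2 = 1 ->
     cub C (erot e a b o0) (erot e a b o0) (erot e a b o0) <= cub C (e o0) (e o0) (e o0)) :
  exists (gamma lambda mu : R)
         (hk : 'I_n -> 'I_n -> 'I_n -> R),
    (forall a : 'I_n, val a = 0%N -> sff C (e a) (e a) = gamma *: e a) /\
    (forall a b : 'I_n, val a = 0%N -> val b = 1%N ->
       sff C (e a) (e b) = (n%:R * lambda - gamma) *: e b) /\
    (forall a b : 'I_n, val a = 0%N -> val b = 1%N ->
       sff C (e b) (e b) = (n%:R * lambda - gamma) *: e a + (n%:R * mu) *: e b) /\
    (forall a i : 'I_n, val a = 0%N -> (2 <= val i)%N ->
       sff C (e a) (e i) = lambda *: e i) /\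
    (forall b i : 'I_n, val b = 1%N -> (2 <= val i)%N ->
       sff C (e b) (e i) = mu *: e i) /\
    (forall a b i j : 'I_n, val a = 0%N -> val b = 1%N ->
       (2 <= val i)%N -> (2 <= val j)%N ->
       sff C (e i) (e j) =
         (i == j)%:R *: (lambda *: e a + mu *: e b)
         + \sum_(k < n | (2 <= val k)%N) hk i j k *: e k) /\
    (forall i j k : 'I_n, (2 <= val i)%N -> (2 <= val j)%N -> (2 <= val k)%N ->
       hk i j k = hk j i k /\ hk i j k = hk i k j) /\
    (forall k : 'I_n, (2 <= val k)%N ->
       \sum_(i < n | (2 <= val i)%N) hk i i k = 0) /\
    0 <= gamma /\
    2%:R * n%:R / 3%:R * lambda <= gamma /\
    (gamma = 0 -> lambda = 0 /\ mu = 0) /\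
    (0 < gamma -> n%:R / 2 * lambda < gamma).
Proof.
pose D := De C e.
have Dsym : cubic_symmetric D := De_sym hLag e.
have [l0 [l1 [S1 [S2 [T0 T1]]]]] := sos_eq Dsym heqQ.
have hcirc : forall a b : R, a ^+ 2 + b ^+ 2 = 1 ->
    gcub (D o0 o0 o0) (D o0 o0 o1) (D o0 o1 o1) (D o1 o1 o1) a b <= D o0 o0 o0.
  by move=> a b hab; have := hmax a b hab; rewrite erot0 (cub_rot hLag).
have [q0 [hb [hg hg0]]] := circle_max hcirc.
have ex : forall i j, sff C (e i) (e j) =
    D i j o0 *: e o0 + D i j o1 *: e o1 + \sum_(k < n | (2 <= k)%N) D i j k *: e k.
  by move=> i j; rewrite {1}(expand He (sff C (e i) (e j))) split3V.
have P12 := Dsym12 Dsym; have P23 := Dsym23 Dsym.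
have hT0 : D o0 o0 o0 + D o0 o1 o1 = n%:R * l0.
  by rewrite -T0 /tt (P23 o1 o1 o0) (P12 o1 o0 o1).
have hT1 : D o0 o0 o1 + D o1 o1 o1 = n%:R * l1 by rewrite -T1.
have hn0 : 0 < n%:R :> R by rewrite ltr0n; have := hn; lia.
exists (D o0 o0 o0), l0, l1, D.
have is0 : forall a : 'I_n, val a = 0%N -> a = o0 by move=> a ha; exact: val_inj.
have is1 : forall a : 'I_n, val a = 1%N -> a = o1 by move=> a ha; exact: val_inj.
have zB : forall (x : 'I_n -> R), (forall k : 'I_n, (2 <= k)%N -> x k = 0) ->
     \sum_(k < n | (2 <= k)%N) x k *: e k = 0.
  by move=> x hx; apply: big1 => k hk; rewrite hx // scale0r.
split; [|split; [|split; [|split; [|split; [|split; [|split; [|split]]]]]]].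
- move=> a /is0 ->; rewrite ex zB; last by move=> k hk; case: (S1 k hk).
  by rewrite q0 scale0r !addr0.
- move=> a b /is0 -> /is1 ->; rewrite ex zB; last by move=> k hk; case: (S1 k hk) => _ [].
  rewrite (P23 o0 o1 o0) q0 scale0r add0r addr0; congr (_ *: _); lra.
- move=> a b /is0 -> /is1 ->; rewrite ex zB; last by move=> k hk; case: (S1 k hk) => _ [_ []].
  rewrite addr0 (P23 o1 o1 o0) (P12 o1 o0 o1); congr (_ *: _ + _ *: _); lra.
- move=> a i /is0 -> hi.
  rewrite ex (P23 o0 i o0) (P23 o0 i o1).
  have [-> [-> _]] := S1 i hi.
  rewrite !scale0r !add0r; under eq_bigr => k hk do rewrite (proj1 (S2 i k hi hk)).
  exact: sum_B_deltaV.
- move=> b i /is1 -> hi.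
  rewrite ex (P23 o1 i o0) (P12 o1 o0 i) (P23 o1 i o1).
  have [_ [-> [-> _]]] := S1 i hi.
  rewrite !scale0r !add0r; under eq_bigr => k hk do rewrite (proj2 (S2 i k hi hk)).
  exact: sum_B_deltaV.
- move=> a b i j /is0 -> /is1 -> hi hj.
  rewrite ex.
  have -> : D i j o0 = (i == j)%:R * l0 by rewrite (P23 i j o0) (P12 i o0 j); exact: (proj1 (S2 i j hi hj)).
  have -> : D i j o1 = (i == j)%:R * l1 by rewrite (P23 i j o1) (P12 i o1 j); exact: (proj2 (S2 i j hi hj)).
  by rewrite scalerDr !scalerA.
- by move=> i j k _ _ _; exact: Dsym.
- by move=> k hk; have [_ [_ [_ ]]] := S1 k hk.
split; first exact: hg.
split; first lra.
split.
  move=> g0; have [b0 d0] := hg0 g0.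
  have h1 : n%:R * l0 = 0 by lra.
  have h2 : n%:R * l1 = 0 by lra.
  move: h1 h2 => /eqP; rewrite mulf_eq0 gt_eqF //= => /eqP -> /eqP.
  by rewrite mulf_eq0 gt_eqF //= => /eqP ->.
move=> gp.
have : n%:R / 2 * l0 = (D o0 o0 o0 + D o0 o1 o1) / 2 by rewrite hT0; field.
lra.
Qed.
End RotFrame.
Section Topo.
Local Open Scope classical_set_scope.
Variable R : realType.
Variable n : nat.
Variable C : 'I_n -> 'I_n -> 'I_n -> R.
Variable c : R.

Local Notation T := 'rV[R]_(n * n).

Definition fr (x : T) (i : 'I_n) : 'rV[R]_n := row i (vec_mx x).

Lemma frE x i p : fr x i 0 p = x 0 (mxvec_index i p).
Proof. by rewrite /fr !mxE. Qed.

Definition mkx (f : 'I_n -> 'rV[R]_n) : T := mxvec (\matrix_(i, p) f i 0 p).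

Lemma fr_mkx f : fr (mkx f) = f.
Proof.
apply: boolp.funext => i; apply/rowP => p.
by rewrite /fr /mkx mxvecK !mxE.
Qed.

Lemma pc_coord i p : continuous (fun x : T => fr x i 0 p).
Proof.
have -> : (fun x : T => fr x i 0 p) = (fun x : T => x 0 (mxvec_index i p)).
  by apply: boolp.funext => x; rewrite frE.
exact: coord_continuous.
Qed.

Lemma pc_add (f g : T -> R) : continuous f -> continuous g -> continuous (fun x => f x + g x).
Proof. by move=> cf cg x; apply: continuousD; [exact: cf | exact: cg]. Qed.

Lemma pc_mul (f g : T -> R) : continuous f -> continuous g -> continuous (fun x => f x * g x).
Proof. by move=> cf cg x; apply: continuousM; [exact: cf | exact: cg]. Qed.

Lemma pc_opp (f : T -> R) : continuous f -> continuous (fun x => - f x).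
Proof. by move=> cf x; apply: continuousN; exact: cf. Qed.

Lemma pc_cst (a : R) : continuous (fun _ : T => a).
Proof. exact: cst_continuous. Qed.

Lemma pc_sum (I : Type) (r : seq I) (P : pred I) (F : I -> T -> R) :
  (forall i, continuous (F i)) -> continuous (fun x => \sum_(i <- r | P i) F i x).
Proof.
move=> hF; elim: r => [|a r IH].
  have -> : (fun x : T => \sum_(i <- [::] | P i) F i x) = (fun _ => 0).
    by apply: boolp.funext => x; rewrite big_nil.
  exact: pc_cst.
have -> : (fun x : T => \sum_(i <- a :: r | P i) F i x) =
    (fun x => (if P a then F a x else 0) + \sum_(i <- r | P i) F i x).
  by apply: boolp.funext => x; rewrite big_cons; case: (P a); rewrite ?add0r.
apply: pc_add => //; case: (P a) => //; exact: pc_cst.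
Qed.

Definition pcv (F : T -> 'rV[R]_n) := forall p, continuous (fun x => F x 0 p).

Lemma pc_vdot F G : pcv F -> pcv G -> continuous (fun x => vdot (F x) (G x)).
Proof.
move=> hF hG; rewrite /vdot; apply: pc_sum => p; exact: pc_mul.
Qed.

Lemma pcv_sff F G : pcv F -> pcv G -> pcv (fun x => sff C (F x) (G x)).
Proof.
move=> hF hG k.
have -> : (fun x => sff C (F x) (G x) 0 k) =
  (fun x => \sum_(p < n) \sum_(q < n) F x 0 p * G x 0 q * C p q k).
  by apply: boolp.funext => x; rewrite sffE.
apply: pc_sum => p; apply: pc_sum => q; apply: pc_mul; last exact: pc_cst.
exact: pc_mul.
Qed.

Lemma pc_sec F G : pcv F -> pcv G -> continuous (fun x => sec_curv c C (F x) (G x)).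
Proof.
move=> hF hG; rewrite /sec_curv.
have -> : (fun x => c + vdot (sff C (F x) (F x)) (sff C (G x) (G x)) -
      vdot (sff C (F x) (G x)) (sff C (F x) (G x))) =
   (fun x => (c + vdot (sff C (F x) (F x)) (sff C (G x) (G x))) +
      - vdot (sff C (F x) (G x)) (sff C (F x) (G x))) by [].
apply: pc_add; [apply: pc_add; [exact: pc_cst|] | apply: pc_opp];
  apply: pc_vdot; exact: pcv_sff.
Qed.

Lemma pc_tau r (F : 'I_r -> T -> 'rV[R]_n) : (forall a, pcv (F a)) ->
  continuous (fun x => tau_fam c C (fun a => F a x)).
Proof.
move=> hF; rewrite /tau_fam; apply: pc_sum => a; apply: pc_sum => b; exact: pc_sec.
Qed.

Lemma pcv_fr i : pcv (fun x => fr x i).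
Proof. move=> p; exact: pc_coord. Qed.

Definition Kset : set T := [set x | orthonormal_family (fr x)].

Lemma Kset_closed : closed Kset.
Proof.
have -> : Kset = \bigcap_(ab in [set: 'I_n * 'I_n])
    ((fun x => vdot (fr x ab.1) (fr x ab.2)) @^-1` [set y | y = (ab.1 == ab.2)%:R]).
  apply/seteqP; split => x /=.
    by move=> hx [a b] _ /=; exact: hx.
  by move=> hx a b; exact: (hx (a, b) I).
apply: closed_bigI => ab _; apply: preimage_closed; last exact: closed_eq.
move=> x _; apply: pc_vdot; exact: pcv_fr.
Qed.

Lemma Kset_compact : compact Kset.
Proof.
have hB := @rV_compact R (n * n) (fun _ : 'I_(n * n) => `[(-1 : R), 1]%classic) (fun _ => @segment_compact R (-1) 1).
apply: (subclosed_compact Kset_closed hB).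
move=> x hx k /=.
case/mxvec_indexP: k => i p.
rewrite -frE.
have h1 := hx i i; rewrite eqxx /vdot (bigD1 p) //= in h1.
have h2 : 0 <= \sum_(q < n | q != p) fr x i 0 q * fr x i 0 q.
  by apply: sumr_ge0 => q _; rewrite -expr2; exact: sqr_ge0.
set y := fr x i 0 p in h1 *.
rewrite in_itv /=; apply/andP; split; nra.
Qed.

End Topo.
Section Final.
Local Open Scope classical_set_scope.
Variable R : realType.
Variable n : nat.
Hypothesis hn : (5 <= n)%N.

Lemma wid_eq (a b : 'I_2) : (wid hn a == wid hn b) = (a == b).
Proof. by []. Qed.
Lemma sh_eq (a b : 'I_(n - 2)) : (sh hn a == sh hn b) = (a == b).
Proof. by rewrite -(inj_eq val_inj) /= eqn_add2r. Qed.
Lemma wid_sh (a : 'I_2) (b : 'I_(n - 2)) : (wid hn a == sh hn b) = false.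
Proof. apply/negbTE; rewrite -(inj_eq val_inj) /=; have := ltn_ord a; lia. Qed.

Lemma cases_ws (i : 'I_n) : (exists a, i = wid hn a) \/ (exists b, i = sh hn b).
Proof.
case: (ltnP i 2) => hi.
  by left; exists (Ordinal hi); apply: val_inj.
have hb : (i - 2 < n - 2)%N by have := ltn_ord i; lia.
by right; exists (Ordinal hb); apply: val_inj => /=; lia.
Qed.

Lemma d2P : (0 < n - 2)%N. Proof. by have := hn; lia. Qed.
Definition d2 : 'I_(n - 2) := Ordinal d2P.

Definition ef (f1 : 'I_2 -> 'rV[R]_n) (f2 : 'I_(n - 2) -> 'rV[R]_n) (i : 'I_n) :=
  if (i < 2)%N then f1 (insubd ord0 i) else f2 (insubd d2 (i - 2)%N).

Lemma ef_wid f1 f2 a : ef f1 f2 (wid hn a) = f1 a.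
Proof. by rewrite /ef /= ltn_ord valKd. Qed.
Lemma ef_sh f1 f2 b : ef f1 f2 (sh hn b) = f2 b.
Proof.
rewrite /ef /=.
have -> : (b + 2 < 2)%N = false by lia.
by rewrite addnK valKd.
Qed.

Lemma ef_on f1 f2 : orthonormal_family f1 -> orthonormal_family f2 ->
  (forall a b, vdot (f1 a) (f2 b) = 0) -> orthonormal_family (ef f1 f2).
Proof.
move=> h1 h2 h12 i j.
case: (cases_ws i) => [[a ->]|[b ->]]; case: (cases_ws j) => [[a' ->]|[b' ->]];
  rewrite ?ef_wid ?ef_sh ?wid_eq ?sh_eq ?wid_sh //.
all: try exact: h1. all: try exact: h2. all: try by rewrite h12.
by rewrite eq_sym wid_sh vdotC h12.
Qed.

End Final.

Theorem lemma3p1 (R : realType) (n : nat) (hn : (5 <= n)%N) (c : R)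
  (C : 'I_n -> 'I_n -> 'I_n -> R) (hLag : cubic_symmetric C)
  (heq : delta2 c C =
         (n%:R ^+ 2 * (n%:R - 2)) / (4 * (n%:R - 1)) * H2 C
         + 2 * (n%:R - 2) * c) :
  exists (e : 'I_n -> 'rV[R]_n) (gamma lambda mu : R)
         (hk : 'I_n -> 'I_n -> 'I_n -> R),
    orthonormal_family e /\
    (* h(e1,e1) = gamma J e1 *)
    (forall a : 'I_n, val a = 0%N -> sff C (e a) (e a) = gamma *: e a) /\
    (* h(e1,e2) = (n lambda - gamma) J e2 *)
    (forall a b : 'I_n, val a = 0%N -> val b = 1%N ->
       sff C (e a) (e b) = (n%:R * lambda - gamma) *: e b) /\
    (* h(e2,e2) = (n lambda - gamma) J e1 + n mu J e2 *)
    (forall a b : 'I_n, val a = 0%N -> val b = 1%N ->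
       sff C (e b) (e b) = (n%:R * lambda - gamma) *: e a + (n%:R * mu) *: e b) /\
    (* h(e1,ei) = lambda J ei,  h(e2,ei) = mu J ei  (i >= 3) *)
    (forall a i : 'I_n, val a = 0%N -> (2 <= val i)%N ->
       sff C (e a) (e i) = lambda *: e i) /\
    (forall b i : 'I_n, val b = 1%N -> (2 <= val i)%N ->
       sff C (e b) (e i) = mu *: e i) /\
    (* h(ei,ej) = delta_ij (lambda J e1 + mu J e2) + sum_{k>=3} h^k_ij J ek *)
    (forall a b i j : 'I_n, val a = 0%N -> val b = 1%N ->
       (2 <= val i)%N -> (2 <= val j)%N ->
       sff C (e i) (e j) =
         (i == j)%:R *: (lambda *: e a + mu *: e b)
         + \sum_(k < n | (2 <= val k)%N) hk i j k *: e k) /\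
    (* h^k_ij symmetric in i, j, k >= 3 *)
    (forall i j k : 'I_n, (2 <= val i)%N -> (2 <= val j)%N -> (2 <= val k)%N ->
       hk i j k = hk j i k /\ hk i j k = hk i k j) /\
    (* h^k_33 + ... + h^k_nn = 0 *)
    (forall k : 'I_n, (2 <= val k)%N ->
       \sum_(i < n | (2 <= val i)%N) hk i i k = 0) /\
    0 <= gamma /\
    2%:R * n%:R / 3%:R * lambda <= gamma /\
    (gamma = 0 -> lambda = 0 /\ mu = 0) /\
    (0 < gamma -> n%:R / 2 * lambda < gamma).
Proof.
pose G (x : 'rV[R]_(n * n)) := Gfr hn C c (fr x).
have cG : continuous G.
  move=> x; apply: pc_add.
    by apply: (@pc_tau R n C c 2 (fun a x => fr x (wid hn a))) => a; exact: pcv_fr.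
  by apply: (@pc_tau R n C c (n - 2) (fun b x => fr x (sh hn b))) => b; exact: pcv_fr.
have K0 : ((@Kset R n) !=set0)%classic.
  by exists (mkx (@std_basis R n)); rewrite /Kset /= fr_mkx; exact: std_on.
have [xs xsK xsmin] := EVT_min_rV K0 (@Kset_compact R n) (continuous_subspaceT cG).
pose M1 := ((@Kset R n) `&` [set x | G x = G xs])%classic.
have M1c : compact M1.
  apply: compact_closedI; first exact: Kset_compact.
  have -> : [set x | G x = G xs]%classic = (G @^-1` [set y | y = G xs])%classic by [].
  by apply: preimage_closed; [move=> x _; exact: cG | exact: closed_eq].
have M10 : (M1 !=set0)%classic by exists xs; split => //; rewrite inE in xsK.
pose Dx (x : 'rV[R]_(n * n)) := cub C (fr x (o0 hn)) (fr x (o0 hn)) (fr x (o0 hn)).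
have cD : continuous Dx.
  by move=> x; apply: pc_vdot; [apply: pcv_sff|]; exact: pcv_fr.
have [xm xmM1 xmmax] := EVT_max_rV M10 M1c (continuous_subspaceT cD).
rewrite inE in xmM1; case: xmM1 => He hGm.
pose e := fr xm.
move: heq; rewrite /delta2.
set S := (X in inf X).
have xsK' : orthonormal_family (fr xs) by rewrite inE in xsK.
have hmem : S (G xs).
  exists (fun a => fr xs (wid hn a)), (fun b => fr xs (sh hn b)).
  split; first by move=> a b; rewrite xsK' wid_eq.
  split; first by move=> a b; rewrite xsK' sh_eq.
  split; first by move=> a b; rewrite xsK' wid_sh.
  by [].
have hlb : lbound S (G xs).
  move=> s [f1 [f2 [h1 [h2 [h12 ->]]]]].
  have hx : (@Kset R n) (mkx (ef hn f1 f2)) by rewrite /Kset /= fr_mkx; exact: ef_on.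
  have := xsmin (mkx (ef hn f1 f2)); rewrite inE => /(_ hx).
  rewrite /G /Gfr fr_mkx.
  have -> : (fun a => ef hn f1 f2 (wid hn a)) = f1 by apply: boolp.funext => a; exact: ef_wid.
  have -> : (fun b => ef hn f1 f2 (sh hn b)) = f2 by apply: boolp.funext => b; exact: ef_sh.
  by [].
have hinf : inf S = G xs.
  apply/eqP; rewrite eq_le; apply/andP; split.
    have hl : has_lbound S by exists (G xs).
    exact: (ge_inf hl hmem).
  by apply: lb_le_inf => //; exists (G xs).
rewrite hinf => heq.
have hQ' : tau_p c C - G xs = 2 * (n%:R - 2) * c + Qp hn (De C e).
  by rewrite -hGm; exact: (Q_frame hn hLag c He).
have H2e := H2_frame hn C He.
have hn0 : n%:R != 0 :> R by rewrite pnatr_eq0 -lt0n; have := hn; lia.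
have hn1 : n%:R - 1 != 0 :> R.
  have : 5 <= n%:R :> R by rewrite (ler_nat R 5 n).
  by move=> h5; rewrite gt_eqF //; lra.
have heqQ : Qp hn (De C e) = alpha R n * HH (De C e).
  have h' : Qp hn (De C e) = n%:R ^+ 2 * (n%:R - 2) / (4 * (n%:R - 1)) * (HH (De C e) / n%:R ^+ 2).
    by rewrite -H2e; lra.
  by rewrite h' /alpha; field; rewrite hn0 hn1.
have hmax : forall a b : R, a ^+ 2 + b ^+ 2 = 1 ->
     cub C (erot hn e a b (o0 hn)) (erot hn e a b (o0 hn)) (erot hn e a b (o0 hn))
     <= cub C (e (o0 hn)) (e (o0 hn)) (e (o0 hn)).
  move=> a b hab.
  pose xr := mkx (erot hn e a b).
  have xrM : M1 xr.
    split; first by rewrite /Kset /= fr_mkx; exact: erot_on.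
    by rewrite /= /G fr_mkx (G_rot hn hLag c e hab); exact: hGm.
  have := xmmax xr; rewrite inE => /(_ xrM).
  by rewrite /Dx fr_mkx.
have [g [l [m [hk H]]]] := conclude hLag He heqQ hmax.
by exists e, g, l, m, hk; split.
Qed.
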